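(* The consecutive patterns $\underline{2010}$ and $\underline{2110}$ are reciprocal, and the consecutive patterns $\underline{2110}$ and $\underline{2120}$ are reciprocal. Here two consecutive patterns $p,q$ are reciprocal if for every $n\ge1$ and all $S,T\subseteq[n]$, $$|\{\epsilon\in I_n:\operatorname{Em}(p,\epsilon)=S,\ \operatorname{Em}(q,\epsilon)=T\}|=|\{\epsilon\in I_n:\operatorname{Em}(p,\epsilon)=T,\ \operatorname{Em}(q,\epsilon)=S\}|.$$
   Context: An inversion sequence of length $n$ is an integer sequence $\epsilon=\epsilon_1\cdots\epsilon_n$ with $0\le\epsilon_i<i$ for all $i$; $I_n$ denotes the set of them. The reduction of an integer word is obtained by replacing every occurrence of its $k$-th smallest distinct value by $k-1$. A consecutive pattern $p=\underline{p_1\cdots p_r}$ occurs in a sequence $\epsilon$ at position $i$ if the reduction of $\epsilon_i\epsilon_{i+1}\cdots\epsilon_{i+r-1}$ equals $p_1\cdots p_r$. $\operatorname{Em}(p,\epsilon)$ is the set of all positions at which $p$ occurs in $\epsilon$, and $[n]=\{1,\dots,n\}$. *)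

(* Defs.v *)
From mathcomp Require Import all_boot.
Set Implicit Arguments. Unset Strict Implicit. Unset Printing Implicit Defensive.

Definition reduction (w : seq nat) : seq nat :=
  [seq count (fun y => y < x) (undup w) | x <- w].

(* An inversion sequence of length n, stored 0-indexed as a tuple:
   the entry at 0-indexed position i is eps_{i+1}, and must satisfy
   eps_{i+1} < i+1. *)
Definition is_invseq n (e : n.-tuple 'I_n) : bool :=
  [forall i : 'I_n, nat_of_ord (tnth e i) <= i].

Definition word n (e : n.-tuple 'I_n) : seq nat := [seq nat_of_ord x | x <- e].

(* p occurs at (1-indexed) position i+1, where i : 'I_n is 0-indexed:
   the window eps_{i+1} ... eps_{i+r} fits and its reduction equals p. *)
Definition occurs_at (p : seq nat) n (e : n.-tuple 'I_n) (i : nat) : bool :=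
  (i + size p <= n) && (reduction (take (size p) (drop i (word e))) == p).

(* Em(p, eps), as a subset of [n] encoded 0-indexed as {set 'I_n}. *)
Definition Em (p : seq nat) n (e : n.-tuple 'I_n) : {set 'I_n} :=
  [set i : 'I_n | occurs_at p e i].

Definition count_pair (p q : seq nat) n (S T : {set 'I_n}) : nat :=
  #|[set e : n.-tuple 'I_n | is_invseq e && (Em p e == S) && (Em q e == T)]|.

Definition reciprocal (p q : seq nat) : Prop :=
  forall n : nat, 1 <= n -> forall S T : {set 'I_n},
    count_pair p q S T = count_pair p q T S.

(* Main.v *)
Require Import Defs.
From mathcomp Require Import all_boot zify.
Set Implicit Arguments. Unset Strict Implicit. Unset Printing Implicit Defensive.

Ltac crunch := repeat (match goal with
  | |- context[?x == ?y :> nat] => (have ->: (x == y) = false by lia) || (have ->: (x == y) = true by lia)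
  | |- context[?x < ?y] => (have ->: (x < y) = false by lia) || (have ->: (x < y) = true by lia)
  end).

Lemma count_split_lt x y (l : seq nat) : x <= y ->
  count (fun z => z < y) l = count (fun z => z < x) l + count (fun z => x <= z < y) l.
Proof.
move=> hxy; elim: l => //= z l ->.
case: (ltnP z x) => h1; case: (ltnP z y) => h2 /=; lia.
Qed.

Lemma rmono (s : seq nat) x y : x \in s -> y \in s ->
  (count (fun z => z < x) (undup s) < count (fun z => z < y) (undup s)) = (x < y).
Proof.
move=> xs ys; case: (ltnP x y) => hxy.
- rewrite (count_split_lt (undup s) (ltnW hxy)).
  rewrite -ltn_subLR ?subnn // -has_count; apply/hasP; exists x.
    by rewrite mem_undup.
  by rewrite leqnn hxy.
- rewrite ltnNge; apply/negbF; apply: sub_count => z /= hz; exact: leq_trans hz hxy.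
Qed.

Lemma red4 a b c d : reduction [:: a; b; c; d] =
  [seq count (fun z => z < x) (undup [:: a; b; c; d]) | x <- [:: a; b; c; d]].
Proof. by []. Qed.

Lemma red2010 a b c d : (reduction [:: a; b; c; d] == [:: 2; 0; 1; 0]) = [&& c < a, b < c & d == b].
Proof.
apply/idP/idP.
- rewrite red4 /= => /eqP [ha hb hc hd].
  have m := @rmono [:: a; b; c; d].
  have ca : c < a by rewrite -m ?inE ?eqxx ?orbT // hc ha.
  have bc : b < c by rewrite -m ?inE ?eqxx ?orbT // hc hb.
  have db1 : ~~ (d < b) by rewrite -m ?inE ?eqxx ?orbT // hd hb.
  have db2 : ~~ (b < d) by rewrite -m ?inE ?eqxx ?orbT // hd hb.
  apply/and3P; split => //; lia.
- case/and3P => h1 h2 /eqP ->.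
  rewrite red4 /= !inE; crunch; rewrite /=; crunch; by [].
Qed.

Lemma red2110 a b c d : (reduction [:: a; b; c; d] == [:: 2; 1; 1; 0]) = [&& b < a, c == b & d < b].
Proof.
apply/idP/idP.
- rewrite red4 /= => /eqP [ha hb hc hd].
  have m := @rmono [:: a; b; c; d].
  have ba : b < a by rewrite -m ?inE ?eqxx ?orbT // hb ha.
  have db : d < b by rewrite -m ?inE ?eqxx ?orbT // hd hb.
  have cb1 : ~~ (c < b) by rewrite -m ?inE ?eqxx ?orbT // hc hb.
  have cb2 : ~~ (b < c) by rewrite -m ?inE ?eqxx ?orbT // hc hb.
  apply/and3P; split => //; lia.
- case/and3P => h1 /eqP -> h2.
  rewrite red4 /= !inE; crunch; rewrite /=; crunch; by [].
Qed.

Lemma red2120 a b c d : (reduction [:: a; b; c; d] == [:: 2; 1; 2; 0]) = [&& b < a, c == a & d < b].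
Proof.
apply/idP/idP.
- rewrite red4 /= => /eqP [ha hb hc hd].
  have m := @rmono [:: a; b; c; d].
  have ba : b < a by rewrite -m ?inE ?eqxx ?orbT // hb ha.
  have db : d < b by rewrite -m ?inE ?eqxx ?orbT // hd hb.
  have cb1 : ~~ (c < a) by rewrite -m ?inE ?eqxx ?orbT // hc ha.
  have cb2 : ~~ (a < c) by rewrite -m ?inE ?eqxx ?orbT // hc ha.
  apply/and3P; split => //; lia.
- case/and3P => h1 /eqP -> h2.
  rewrite red4 /= !inE; crunch; rewrite /=; crunch; by [].
Qed.

Lemma compl_le (I : finType) (S A : {set I}) : S \subset A -> #|~: A| <= #|~: S|.
Proof. by move=> h; apply: subset_leq_card; rewrite setCS. Qed.

Lemma compl_lt (I : finType) (S A : {set I}) : S \subset A -> A != S -> #|~: A| < #|~: S|.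
Proof.
move=> h hne; apply: proper_card; rewrite properEneq setCS h andbT.
by apply: contra hne => /eqP /setC_inj ->.
Qed.

Lemma recip_from_N (X I : finType) (D : pred X) (Ep Eq : X -> {set I}) :
  (forall S T : {set I}, #|[set x | D x && (S \subset Ep x) && (T \subset Eq x)]|
      <= #|[set x | D x && (T \subset Ep x) && (S \subset Eq x)]|) ->
  forall S T, #|[set x | D x && (Ep x == S) && (Eq x == T)]|
            = #|[set x | D x && (Ep x == T) && (Eq x == S)]|.
Proof.
move=> hle.
pose c (A B : {set I}) := #|[set x | D x && (Ep x == A) && (Eq x == B)]|.
pose N (S T : {set I}) := #|[set x | D x && (S \subset Ep x) && (T \subset Eq x)]|.
have hN (S T : {set I}) : N S T = \sum_(j : {set I} * {set I} | (S \subset j.1) && (T \subset j.2)) c j.1 j.2.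
  rewrite /N -sum1_card (partition_big (fun x => (Ep x, Eq x))
      (fun j : {set I} * {set I} => (S \subset j.1) && (T \subset j.2))); last first.
    by move=> x; rewrite inE => /andP [/andP [_ ->] ->].
  apply: eq_bigr => [[A B]] /= /andP [hA hB].
  rewrite /c -sum1_card; apply: eq_bigl => x; rewrite !inE xpair_eqE.
  case: (Ep x =P A) => [->|]; case: (Eq x =P B) => [->|]; rewrite ?hA ?hB ?andbF ?andbT //.
have hNs (S T : {set I}) : N S T = N T S by apply/eqP; rewrite eqn_leq !hle.
pose m (A B : {set I}) := #|~: A| + #|~: B|.
have step (S T : {set I}) : (forall A B, m A B < m S T -> c A B = c B A) -> c S T = c T S.
  move=> IH; have := hNs S T; rewrite /N.
  have e1 := hN S T; have e2 := hN T S; rewrite /N in e1 e2.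
  rewrite (bigD1 (S, T)) /= ?subxx // in e1.
  rewrite (bigD1 (T, S)) /= ?subxx // in e2.
  rewrite (reindex_inj (h := fun j : {set I} * {set I} => (j.2, j.1))) /= in e2; last first.
    by move=> [a b] [a' b'] /= [-> ->].
  rewrite e1 e2.
  suff -> : \sum_(i : {set I} * {set I} | (S \subset i.1) && (T \subset i.2) && (i != (S, T))) c i.1 i.2 =
    \sum_(j : {set I} * {set I} | (T \subset j.2) && (S \subset j.1) && ((j.2, j.1) != (T, S))) c j.2 j.1.
    by move/eqP; rewrite eqn_add2r => /eqP.
  apply: eq_big => [[A B]|[A B]] /=.
    by rewrite !xpair_eqE; case: (S \subset A); case: (T \subset B); rewrite /= ?andbF // andbC.
  case/andP => /andP [hA hB] hne; apply: IH; rewrite /m.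
  rewrite xpair_eqE negb_and in hne.
  case/orP: hne => hne.
    by apply: leq_trans (leq_add (compl_lt hA hne) (compl_le hB)) _.
  by rewrite -addnS; apply: leq_add (compl_le hA) (compl_lt hB hne).
suff: forall k S T, m S T <= k -> c S T = c T S by move=> H S T; exact: H _ _ _ (leqnn _).
elim=> [|k IH] S T hk; apply: step => A B hAB.
  by move: (leq_trans hAB hk).
by apply: IH; rewrite -ltnS (leq_trans hAB hk).
Qed.

Definition P1 (e : nat -> nat) i := [&& e i.+2 < e i, e i.+1 < e i.+2 & e i.+3 == e i.+1].
Definition Q1 (e : nat -> nat) i := [&& e i.+1 < e i, e i.+2 == e i.+1 & e i.+3 < e i.+1].
Definition Q2 (e : nat -> nat) i := [&& e i.+1 < e i, e i.+2 == e i & e i.+3 < e i.+1].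

Fixpoint G1 (u : nat -> bool) (e : nat -> nat) (k j : nat) : nat :=
  if k is k'.+1 then
    (if (0 < j) && u j.-1 then (if e j == e j.+1 then G1 u e k' j.+2 else e j.+1) else e j)
  else e j.

Definition hyp1 n (u : nat -> bool) e := forall i, u i -> (i + 4 <= n) && (P1 e i || Q1 e i).

Lemma G1_stab n u e : hyp1 n u e -> forall k k' j, n <= j + k -> n <= j + k' ->
  G1 u e k j = G1 u e k' j.
Proof.
move=> hu; elim=> [|k IH] [|k'] j h1 h2 //=.
- case: j h1 h2 => [|j] h1 h2 //=. case hj: (u j) => //.
  by move: (hu _ hj) => /andP [? _]; lia.
- case: j h1 h2 => [|j] h1 h2 //=. case hj: (u j) => //.
  by move: (hu _ hj) => /andP [? _]; lia.
- by rewrite (IH k'); lia.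
Qed.

Lemma G1_unfold n u e : hyp1 n u e -> forall j, G1 u e n j =
  if (0 < j) && u j.-1 then (if e j == e j.+1 then G1 u e n j.+2 else e j.+1) else e j.
Proof.
move=> hu j; case: n hu => [|n] hu /=.
  case: j => [|j] //=; case hj: (u j) => //.
  by move: (hu _ hj) => /andP [? _]; lia.
by rewrite (G1_stab hu (k := n) (k' := n.+1)) //; lia.
Qed.




Lemma hyp1_R n u e i : hyp1 n u e -> u i ->
  [/\ i + 4 <= n, e i.+3 < e i.+2, e i.+2 < e i & (e i.+1 == e i.+2) || (e i.+1 == e i.+3)].
Proof.
move=> hu ui; move: (hu _ ui) => /andP [hn /orP [] /and3P [h1 h2 /eqP h3]]; split => //; lia.
Qed.

Lemma hyp1_noadj n u e i : hyp1 n u e -> u i -> u i.+1 = false.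
Proof.
move=> hu ui; apply/negbTE/negP => ui1.
move: (hu _ ui) (hu _ ui1) => /andP [_ /orP [] /and3P [? ? /eqP ?]] /andP [_ /orP [] /and3P [? ? /eqP ?]]; lia.
Qed.

Lemma g1_far n u e j : hyp1 n u e -> n <= j -> G1 u e n j = e j.
Proof.
move=> hu hj; rewrite (G1_unfold hu); case: j hj => [|j] hj //=.
case hj': (u j) => //; by move: (hu _ hj') => /andP [? _]; lia.
Qed.

Lemma g1_le n u e : hyp1 n u e -> forall i, u i -> G1 u e n i.+1 <= e i.+2.
Proof.
move=> hu.
suff: forall m i, n - i <= m -> u i -> G1 u e n i.+1 <= e i.+2 by move=> H i; exact: H _ i (leqnn _).
elim=> [|m IH] i hm ui; have [hn h1 h2 h3] := hyp1_R hu ui; first by lia.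
rewrite (G1_unfold hu) /= ui.
case: eqP => // _.
case ui2: (u i.+2).
  have := IH _ _ ui2; have [_ _ h4 _] := hyp1_R hu ui2; lia.
rewrite (G1_unfold hu) /= ui2; lia.
Qed.

Lemma g1_3 n u e i : hyp1 n u e -> u i -> G1 u e n i.+3 < e i.+2.
Proof.
move=> hu ui; have [hn h1 h2 h3] := hyp1_R hu ui.
case ui2: (u i.+2).
  have := g1_le hu ui2; have [_ _ h4 _] := hyp1_R hu ui2; lia.
rewrite (G1_unfold hu) /= ui2; lia.
Qed.

Lemma g1_0 n u e i : hyp1 n u e -> u i -> G1 u e n i = e i.
Proof.
move=> hu ui; rewrite (G1_unfold hu); case: i ui => [|i] ui //=.
case uk: (u i) => //; by rewrite (hyp1_noadj hu uk) in ui.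
Qed.

Lemma g1_2 n u e i : hyp1 n u e -> u i -> G1 u e n i.+2 = e i.+2.
Proof. by move=> hu ui; rewrite (G1_unfold hu) /= (hyp1_noadj hu ui). Qed.

Lemma g1_flipP n u e i : hyp1 n u e -> u i -> P1 e i -> Q1 (G1 u e n) i.
Proof.
move=> hu ui /and3P [h1 h2 /eqP h3].
have g0 := g1_0 hu ui; have g2 := g1_2 hu ui; have g3 := g1_3 hu ui.
have g1 : G1 u e n i.+1 = e i.+2.
  by rewrite (G1_unfold hu) /= ui; case: eqP => //; lia.
apply/and3P; split; rewrite ?g0 ?g1 ?g2 //; lia.
Qed.

Lemma g1_flipQ n u e i : hyp1 n u e -> u i -> Q1 e i -> P1 (G1 u e n) i.
Proof.
move=> hu ui /and3P [h1 /eqP h2 h3].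
have g0 := g1_0 hu ui; have g2 := g1_2 hu ui; have g3 := g1_3 hu ui.
have g1 : G1 u e n i.+1 = G1 u e n i.+3.
  by rewrite (G1_unfold hu) /= ui h2 eqxx.
apply/and3P; split; rewrite ?g0 ?g1 ?g2 //; lia.
Qed.

Lemma g1_hyp n u e : hyp1 n u e -> hyp1 n u (G1 u e n).
Proof.
move=> hu i ui; move: (hu _ ui) => /andP [-> /orP []] h /=.
  by rewrite (g1_flipP hu ui h) orbT.
by rewrite (g1_flipQ hu ui h).
Qed.

Lemma hyp1_ext n u e e2 : e =1 e2 -> hyp1 n u e -> hyp1 n u e2.
Proof. by move=> E hu i ui; move: (hu _ ui); rewrite /P1 /Q1 !E. Qed.

Lemma G1_ext u e e2 : e =1 e2 -> forall k j, G1 u e k j = G1 u e2 k j.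
Proof. by move=> E; elim=> [|k IH] j //=; rewrite !E IH. Qed.

Lemma g1_bound n u e : hyp1 n u e -> (forall k, e k <= k) -> forall j, G1 u e n j <= j.
Proof.
move=> hu he j; rewrite (G1_unfold hu); case: j => [|i] /=; first by rewrite he.
case ui: (u i); last by rewrite he.
have := g1_le hu ui; rewrite (G1_unfold hu) /= ui.
have [_ _ h2 _] := hyp1_R hu ui; have := he i; lia.
Qed.

Lemma g1_inv n u e : hyp1 n u e -> forall e2, e2 =1 G1 u e n -> forall j, G1 u e2 n j = e j.
Proof.
move=> hu e2 E.
have hu2 : hyp1 n u e2 by apply: (hyp1_ext (e := G1 u e n)); [move=> x; rewrite E | exact: g1_hyp].
suff: forall m j, n - j <= m -> G1 u e2 n j = e j by move=> H j; exact: H _ j (leqnn _).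
elim=> [|m IH] j hm.
  rewrite (g1_far hu2); last by lia.
  by rewrite E (g1_far hu) //; lia.
rewrite (G1_unfold hu2); case: j hm => [|i] hm /=.
  by rewrite E (G1_unfold hu).
case ui: (u i); last by rewrite E (G1_unfold hu) /= ui.
have g2 := g1_2 hu ui; have g3 := g1_3 hu ui.
move: (hu _ ui) => /andP [hn /orP [] h].
- have g1 : G1 u e n i.+1 = e i.+2.
    by rewrite (G1_unfold hu) /= ui; case/and3P: h => ? ? ?; case: eqP => //; lia.
  rewrite !E g1 g2 eqxx IH; last by lia.
  by case/and3P: h => _ _ /eqP.
- have g1 : G1 u e n i.+1 = G1 u e n i.+3.
    by rewrite (G1_unfold hu) /= ui; case/and3P: h => _ /eqP -> _; rewrite eqxx.
  rewrite !E g1 g2; case: eqP => [|_]; first by lia.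
  by case/and3P: h => _ /eqP -> _.
Qed.

Fixpoint G2 (u : nat -> bool) (e : nat -> nat) (j : nat) : nat :=
  match j with
  | k.+2 => if u k then (if e k.+2 == e k.+1 then G2 u e k else e k.+1) else e k.+2
  | _ => e j
  end.

Definition hyp2 n (u : nat -> bool) e := forall i, u i -> (i + 4 <= n) && (Q1 e i || Q2 e i).

Lemma hyp2_R n u e i : hyp2 n u e -> u i ->
  [/\ i + 4 <= n, e i.+3 < e i.+1, e i.+1 < e i & (e i.+2 == e i) || (e i.+2 == e i.+1)].
Proof.
move=> hu ui; move: (hu _ ui) => /andP [hn /orP [] /and3P [h1 /eqP h2 h3]]; split => //; lia.
Qed.

Lemma hyp2_noadj n u e i : hyp2 n u e -> u i -> u i.+1 = false.
Proof.
move=> hu ui; apply/negbTE/negP => ui1.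
move: (hu _ ui) (hu _ ui1) => /andP [_ /orP [] /and3P [? /eqP ? ?]] /andP [_ /orP [] /and3P [? /eqP ? ?]]; lia.
Qed.

Lemma g2_far n u e j : hyp2 n u e -> n <= j -> G2 u e j = e j.
Proof.
move=> hu hj; case: j hj => [|[|k]] hj //=.
case hk: (u k) => //; by move: (hu _ hk) => /andP [? _]; lia.
Qed.

Lemma g2_1 n u e i : hyp2 n u e -> u i -> G2 u e i.+1 = e i.+1.
Proof.
move=> hu ui; case: i ui => [|k] ui //=.
case uk: (u k) => //; by rewrite (hyp2_noadj hu uk) in ui.
Qed.

Lemma g2_3 n u e i : hyp2 n u e -> u i -> G2 u e i.+3 = e i.+3.
Proof. by move=> hu ui /=; rewrite (hyp2_noadj hu ui). Qed.

Lemma g2_gt n u e : hyp2 n u e -> forall i, u i -> e i.+1 < G2 u e i.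
Proof.

move=> hu; suff H: forall m i, i <= m -> u i -> e i.+1 < G2 u e i.
  by move=> j; apply: (H j j (leqnn j)).
elim=> [|m IH] i hm ui; have [hn h1 h2 h3] := hyp2_R hu ui.
  by case: i hm ui {h3} h1 h2 hn => //.
case: i hm ui h1 h2 h3 hn => [|[|k]] hm ui h1 h2 h3 hn //=.
case uk: (u k); last by [].
have [_ k1 k2 k3] := hyp2_R hu uk.
case: eqP => _; last by lia.
have := IH k; lia.
Qed.

Lemma g2_2 n u e i : hyp2 n u e -> u i ->
  G2 u e i.+2 = if e i.+2 == e i.+1 then G2 u e i else e i.+1.
Proof. by move=> hu ui /=; rewrite ui. Qed.

Lemma g2_flipP n u e i : hyp2 n u e -> u i -> Q1 e i -> Q2 (G2 u e) i.
Proof.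
move=> hu ui /and3P [h1 /eqP h2 h3].
have g1 := g2_1 hu ui; have g3 := g2_3 hu ui; have g0 := g2_gt hu ui.
rewrite /Q2 g1 g3 (g2_2 hu ui) h2 eqxx eqxx /=; apply/andP; split; lia.
Qed.

Lemma g2_flipQ n u e i : hyp2 n u e -> u i -> Q2 e i -> Q1 (G2 u e) i.
Proof.
move=> hu ui /and3P [h1 /eqP h2 h3].
have g1 := g2_1 hu ui; have g3 := g2_3 hu ui; have g0 := g2_gt hu ui.
rewrite /Q1 g1 g3 (g2_2 hu ui) h2 (_ : (e i == e i.+1) = false); last by apply/eqP; lia.
rewrite eqxx /=; apply/andP; split; lia.
Qed.

Lemma g2_hyp n u e : hyp2 n u e -> hyp2 n u (G2 u e).
Proof.
move=> hu i ui; move: (hu _ ui) => /andP [-> /orP []] h /=.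
  by rewrite (g2_flipP hu ui h) orbT.
by rewrite (g2_flipQ hu ui h).
Qed.

Lemma hyp2_ext n u e e2 : e =1 e2 -> hyp2 n u e -> hyp2 n u e2.
Proof. by move=> E hu i ui; move: (hu _ ui); rewrite /Q1 /Q2 !E. Qed.

Lemma G2_ext u e e2 : e =1 e2 -> forall j, G2 u e j = G2 u e2 j.
Proof.
move=> E j; elim: j {-2}j (leqnn j) => [|j IH] m hm; first by case: m hm => // _; exact: E.
case: m hm => [|[|k]] hm //=; rewrite !E IH //; lia.
Qed.

Lemma g2_bound n u e : hyp2 n u e -> (forall k, e k <= k) -> forall j, G2 u e j <= j.
Proof.
move=> hu he j; elim: j {-2}j (leqnn j) => [|j IH] m hm; first by case: m hm => //= _; exact: he.
case: m hm => [|[|k]] hm /=; rewrite ?he //.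
case: (u k); last exact: he.
case: eqP => _; last by have := he k.+1; lia.
have := IH k; lia.
Qed.

Lemma g2_inv n u e : hyp2 n u e -> forall e2, e2 =1 G2 u e -> forall j, G2 u e2 j = e j.
Proof.
move=> hu e2 E.
have hu2 : hyp2 n u e2 by apply: (hyp2_ext (e := G2 u e)); [move=> x; rewrite E | exact: g2_hyp].
move=> j; elim: j {-2}j (leqnn j) => [|j IH] m hm; first by case: m hm => //= _; rewrite E.
case: m hm => [|[|k]] hm /=; rewrite ?E //.
case uk: (u k); last by rewrite /= uk.
have g1 := g2_1 hu uk; have g0 := g2_gt hu uk.
move: (hu _ uk) => /andP [hn /orP [] h].
- case/and3P: h => h1 /eqP h2 h3.
  rewrite (g2_2 hu uk) h2 eqxx g1 (_ : (G2 u e k == e k.+1) = false) //.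
  by apply/eqP; lia.
- case/and3P: h => h1 /eqP h2 h3.
  rewrite (g2_2 hu uk) h2 g1 (_ : (e k == e k.+1) = false); last by apply/eqP; lia.
  by rewrite eqxx IH //; lia.
Qed.

Definition wf n (e : n.-tuple 'I_n) : nat -> nat := fun j => nth 0 (word e) j.

Lemma wf_lt n (e : n.-tuple 'I_n) k (hk : k < n) : wf e k = tnth e (Ordinal hk).
Proof.
rewrite /wf /word (nth_map (tnth e (Ordinal hk))) ?size_tuple //.
by rewrite [in RHS](tnth_nth (tnth e (Ordinal hk))).
Qed.

Lemma wf_ge n (e : n.-tuple 'I_n) k : n <= k -> wf e k = 0.
Proof. by move=> hk; rewrite /wf nth_default // size_map size_tuple. Qed.

Lemma take4 (w : seq nat) i : i + 4 <= size w ->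
  take 4 (drop i w) = [:: nth 0 w i; nth 0 w i.+1; nth 0 w i.+2; nth 0 w i.+3].
Proof.
move=> h; rewrite (drop_nth 0); last by lia.
rewrite (drop_nth 0 (n := i.+1)); last by lia.
rewrite (drop_nth 0 (n := i.+2)); last by lia.
rewrite (drop_nth 0 (n := i.+3)); last by lia.
by rewrite !take_cons take0.
Qed.

Lemma occurs4 (p : seq nat) n (e : n.-tuple 'I_n) i : size p = 4 ->
  occurs_at p e i = (i + 4 <= n) &&
     (reduction [:: wf e i; wf e i.+1; wf e i.+2; wf e i.+3] == p).
Proof.
move=> hp; rewrite /occurs_at hp; case: leqP => //= h.
by rewrite take4 // size_map size_tuple.
Qed.

Definition hypP (Pp Pq : (nat -> nat) -> nat -> bool) n (u : nat -> bool) (e : nat -> nat) :=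
  forall i, u i -> (i + 4 <= n) && (Pp e i || Pq e i).

Lemma glue (p q : seq nat) (Pp Pq : (nat -> nat) -> nat -> bool)
  (G : nat -> (nat -> bool) -> (nat -> nat) -> nat -> nat) :
  (forall n (e : n.-tuple 'I_n) i, occurs_at p e i = (i + 4 <= n) && Pp (wf e) i) ->
  (forall n (e : n.-tuple 'I_n) i, occurs_at q e i = (i + 4 <= n) && Pq (wf e) i) ->
  (forall e e2 i, e =1 e2 -> Pp e i = Pp e2 i) ->
  (forall e e2 i, e =1 e2 -> Pq e i = Pq e2 i) ->
  (forall n u e, hypP Pp Pq n u e -> (forall k, e k <= k) -> forall j, G n u e j <= j) ->
  (forall n u e i, hypP Pp Pq n u e -> u i -> Pp e i -> Pq (G n u e) i) ->
  (forall n u e i, hypP Pp Pq n u e -> u i -> Pq e i -> Pp (G n u e) i) ->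
  (forall n u e j, hypP Pp Pq n u e -> n <= j -> G n u e j = e j) ->
  (forall n u e, hypP Pp Pq n u e -> forall e2, e2 =1 G n u e -> forall j, G n u e2 j = e j) ->
  reciprocal p q.
Proof.
move=> hp hq ep eq gb gP gQ gn ginv n _.
move=> S T; rewrite /count_pair. have H := (@recip_from_N _ _ (@is_invseq n) (@Em p n) (@Em q n)). apply: (H _ S T) => {H S T} A B.
pose u i := i \in [seq val x | x <- enum (A :|: B)].
have uE (x : 'I_n) : u x = (x \in A :|: B) by rewrite /u mem_map ?mem_enum //; exact: val_inj.
pose phi (e : n.-tuple 'I_n) := [tuple insubd j (G n u (wf e) j) | j < n].
pose D1 := [set x | is_invseq x && (A \subset Em p x) && (B \subset Em q x)].
have hhyp e : e \in D1 -> hypP Pp Pq n u (wf e).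
  rewrite inE => /andP [/andP [_ hA] hB] i /mapP [x]; rewrite mem_enum => hx ->.
  case/setUP: hx => hx.
    by move/subsetP/(_ x hx): hA; rewrite inE hp => /andP [-> ->].
  by move/subsetP/(_ x hx): hB; rewrite inE hq => /andP [-> ->]; rewrite orbT.
have he e : e \in D1 -> forall k, wf e k <= k.
  rewrite inE => /andP [/andP [/forallP hi _] _] k.
  case: (ltnP k n) => hk; last by rewrite wf_ge.
  by rewrite (wf_lt e hk); exact: (hi (Ordinal hk)).
have hw e : e \in D1 -> wf (phi e) =1 G n u (wf e).
  move=> hD k; case: (ltnP k n) => hk.
    rewrite (wf_lt _ hk) tnth_mktuple val_insubd /=.
    by have := gb _ _ _ (hhyp e hD) (he e hD) k; case: ifP => //; lia.
  by rewrite wf_ge // gn ?wf_ge //; exact: hhyp.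
have phiK e : e \in D1 -> phi (phi e) = e.
  move=> hD; apply: eq_from_tnth => j; apply: val_inj.
  rewrite tnth_mktuple val_insubd (ginv _ _ _ (hhyp e hD) _ (hw e hD)).
  have -> : wf e j = tnth e j.
    by rewrite (wf_lt e (ltn_ord j)); congr (val (tnth e _)); exact: val_inj.
  by rewrite ltn_ord.
have inj : {in D1 &, injective phi}.
  by move=> x y hx hy E; rewrite -(phiK x hx) E phiK.
rewrite -(card_in_imset inj); apply: subset_leq_card; apply/subsetP => y /imsetP [e hD ->].
have hD' := hD; rewrite inE in hD'; case/andP: hD' => /andP [_ hA] hB.
rewrite inE; apply/andP; split; first (apply/andP; split).
- apply/forallP => i; rewrite tnth_mktuple val_insubd.
  by have := gb _ _ _ (hhyp e hD) (he e hD) i; case: ifP.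
- apply/subsetP => x hx; rewrite inE hp.
  move/subsetP/(_ x hx): hB; rewrite inE hq => /andP [-> h] /=.
  rewrite (ep _ _ _ (hw e hD)); apply: gQ h; first exact: hhyp.
  by rewrite uE inE hx orbT.
- apply/subsetP => x hx; rewrite inE hq.
  move/subsetP/(_ x hx): hA; rewrite inE hp => /andP [-> h] /=.
  rewrite (eq _ _ _ (hw e hD)); apply: gP h; first exact: hhyp.
  by rewrite uE inE hx.
Qed.

Theorem mainTheorem2 :
  reciprocal [:: 2; 0; 1; 0] [:: 2; 1; 1; 0] /\
  reciprocal [:: 2; 1; 1; 0] [:: 2; 1; 2; 0].
Proof.
split.
- apply: (@glue _ _ P1 Q1 (fun n u e => G1 u e n)).
  + by move=> n e i; rewrite occurs4 // red2010.
  + by move=> n e i; rewrite occurs4 // red2110.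
  + by move=> e e2 i E; rewrite /P1 !E.
  + by move=> e e2 i E; rewrite /Q1 !E.
  + by move=> n u e hu he j; exact: (g1_bound hu he).
  + by move=> n u e i hu ui h; exact: (g1_flipP hu ui h).
  + by move=> n u e i hu ui h; exact: (g1_flipQ hu ui h).
  + by move=> n u e j hu hj; exact: (g1_far hu hj).
  + by move=> n u e hu e2 E j; exact: (g1_inv hu E).
- apply: (@glue _ _ Q1 Q2 (fun n u e => G2 u e)).
  + by move=> n e i; rewrite occurs4 // red2110.
  + by move=> n e i; rewrite occurs4 // red2120.
  + by move=> e e2 i E; rewrite /Q1 !E.
  + by move=> e e2 i E; rewrite /Q2 !E.
  + by move=> n u e hu he j; exact: (g2_bound hu he).
  + by move=> n u e i hu ui h; exact: (g2_flipP hu ui h).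
  + by move=> n u e i hu ui h; exact: (g2_flipQ hu ui h).
  + by move=> n u e j hu hj; exact: (g2_far hu hj).
  + by move=> n u e hu e2 E j; exact: (g2_inv hu E).
Qed.
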